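(* Let $k>0$, $a\in(0,1)$, $d>0$, assume $g$ satisfies (Hg) and that (Hd) holds. Define $\phi:\mathbb R^2\to\mathbb R^2$ by $$\phi(u,v)=\Big(\frac{k+1}{k}u-\frac1k v-\frac{g(u;a)}{kd},\ u\Big).$$ Then there exist horizontal strips $U_0,U_1$ with $U_0\cap U_1=\emptyset$ and vertical strips $V_0,V_1$ with $V_0\cap V_1=\emptyset$, all contained in $[0,1]^2$, such that for $n\in\{0,1\}$: $\phi(V_n)=U_n$, $\phi$ maps the vertical boundaries of $V_n$ onto the vertical boundaries of $U_n$, and maps the horizontal boundaries of $V_n$ onto the horizontal boundaries of $U_n$.
   Context: A function $g:\mathbb R\times[0,1]\to\mathbb R$, $(u,a)\mapsto g(u;a)$, satisfies (Hg) if it is $C^1$ and for every $a\in(0,1)$: $g(0;a)=g(a;a)=g(1;a)=0$, $g'(0;a)<0$, $g'(1;a)<0$, $g'(a;a)>0$ (where $g'=\partial_u g$), $g(v;a)>0$ for $v\in(-\infty,0)\cup(a,1)$ and $g(v;a)<0$ for $v\in(0,a)\cup(1,\infty)$. Let $h(v;a,d)=(k+1)v-\frac1d g(v;a)$. Condition (Hd): there exist $y_0\in(0,a)$ and $y_1\in(a,1)$ with $h(y_0;a,d)>k+1$, $h(y_1;a,d)<0$, and $\partial_v h(v;a,d)>0$ for $v\in(0,y_0)\cup(y_1,1)$. A horizontal curve is the graph $v=v(u)$ of a continuous function on $[0,1]$ with $0\le v(u)\le1$; a vertical curve is the graph $u=u(v)$ of a continuous function on $[0,1]$ with $0\le u(v)\le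 1$. A horizontal strip is $U=\{(u,v):0\le u\le1,\ v_1(u)\le v\le v_2(u)\}$ for horizontal curves $0\le v_1(u)<v_2(u)\le1$; its horizontal boundaries are the graphs of $v_1,v_2$ and its vertical boundaries are $U\cap\{u=0\}$ and $U\cap\{u=1\}$. A vertical strip is $V=\{(u,v):0\le v\le1,\ u_1(v)\le u\le u_2(v)\}$ for vertical curves $0\le u_1(v)<u_2(v)\le1$; its vertical boundaries are the graphs of $u_1,u_2$ and its horizontal boundaries are $V\cap\{v=0\}$ and $V\cap\{v=1\}$. *)

(* Defs.v *)
From Stdlib Require Import Reals.
From Coquelicot Require Import Coquelicot.
Open Scope R_scope.

(* g is C^1 on R x [0,1]: there are partial derivatives gu, ga, continuous on
   R x [0,1], giving a (Frechet) first-order expansion of g within R x [0,1]. *)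
Definition C1_strip (g : R -> R -> R) : Prop :=
  exists gu ga : R -> R -> R,
    (forall u a, 0 <= a <= 1 -> forall eps, 0 < eps -> exists delta, 0 < delta /\
       forall u' a', 0 <= a' <= 1 -> Rabs (u' - u) < delta -> Rabs (a' - a) < delta ->
         Rabs (g u' a' - g u a - gu u a * (u' - u) - ga u a * (a' - a))
           <= eps * (Rabs (u' - u) + Rabs (a' - a))) /\
    (forall u a, 0 <= a <= 1 -> forall eps, 0 < eps -> exists delta, 0 < delta /\
       forall u' a', 0 <= a' <= 1 -> Rabs (u' - u) < delta -> Rabs (a' - a) < delta ->
         Rabs (gu u' a' - gu u a) < eps /\ Rabs (ga u' a' - ga u a) < eps).

Definition gprime (g : R -> R -> R) (u a : R) : R := Derive (fun v => g v a) u.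

Definition Hg (g : R -> R -> R) : Prop :=
  C1_strip g /\
  forall a, 0 < a < 1 ->
    g 0 a = 0 /\ g a a = 0 /\ g 1 a = 0 /\
    gprime g 0 a < 0 /\ gprime g 1 a < 0 /\ gprime g a a > 0 /\
    (forall v, (v < 0 \/ (a < v /\ v < 1)) -> g v a > 0) /\
    (forall v, ((0 < v /\ v < a) \/ 1 < v) -> g v a < 0).

Definition hfun (g : R -> R -> R) (k a d : R) (v : R) : R :=
  (k + 1) * v - / d * g v a.

Definition Hd (g : R -> R -> R) (k a d : R) : Prop :=
  exists y0 y1, 0 < y0 < a /\ a < y1 < 1 /\
    hfun g k a d y0 > k + 1 /\ hfun g k a d y1 < 0 /\
    forall v, ((0 < v /\ v < y0) \/ (y1 < v /\ v < 1)) ->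
      Derive (hfun g k a d) v > 0.

Definition phi (g : R -> R -> R) (k a d : R) (p : R * R) : R * R :=
  let (u, v) := p in
  ((k + 1) / k * u - / k * v - g u a / (k * d), u).

Definition cont01 (f : R -> R) : Prop :=
  forall x, 0 <= x <= 1 -> forall eps, 0 < eps -> exists delta, 0 < delta /\
    forall y, 0 <= y <= 1 -> Rabs (y - x) < delta -> Rabs (f y - f x) < eps.

Definition curve_fun (f : R -> R) : Prop :=
  cont01 f /\ forall x, 0 <= x <= 1 -> 0 <= f x <= 1.

Definition set2 := R * R -> Prop.

Definition hgraph (f : R -> R) : set2 := fun p => 0 <= fst p <= 1 /\ snd p = f (fst p).
Definition vgraph (f : R -> R) : set2 := fun p => 0 <= snd p <= 1 /\ fst p = f (snd p).

Definition strip_curves (f1 f2 : R -> R) : Prop :=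
  curve_fun f1 /\ curve_fun f2 /\ forall x, 0 <= x <= 1 -> f1 x < f2 x.

Definition hstrip (v1 v2 : R -> R) : set2 :=
  fun p => 0 <= fst p <= 1 /\ v1 (fst p) <= snd p <= v2 (fst p).
Definition vstrip (u1 u2 : R -> R) : set2 :=
  fun p => 0 <= snd p <= 1 /\ u1 (snd p) <= fst p <= u2 (snd p).

Definition setU2 (A B : set2) : set2 := fun p => A p \/ B p.
Definition setI2 (A B : set2) : set2 := fun p => A p /\ B p.

Definition hstrip_hbdry (v1 v2 : R -> R) : set2 := setU2 (hgraph v1) (hgraph v2).
Definition hstrip_vbdry (v1 v2 : R -> R) : set2 :=
  fun p => hstrip v1 v2 p /\ (fst p = 0 \/ fst p = 1).
Definition vstrip_vbdry (u1 u2 : R -> R) : set2 := setU2 (vgraph u1) (vgraph u2).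
Definition vstrip_hbdry (u1 u2 : R -> R) : set2 :=
  fun p => vstrip u1 u2 p /\ (snd p = 0 \/ snd p = 1).

Definition image2 (f : R * R -> R * R) (A : set2) : set2 :=
  fun p => exists q, A q /\ f q = p.
Definition seteq2 (A B : set2) : Prop := forall p, A p <-> B p.
Definition disjoint2 (A B : set2) : Prop := forall p, ~ (A p /\ B p).
Definition in_square (A : set2) : Prop :=
  forall p, A p -> 0 <= fst p <= 1 /\ 0 <= snd p <= 1.

(* Main.v *)
Require Import Defs.
From Stdlib Require Import Reals Lra ClassicalEpsilon.
From Coquelicot Require Import Coquelicot.
Open Scope R_scope.

Lemma g_deriv (g : R -> R -> R) (a : R) : C1_strip g -> 0 <= a <= 1 ->
  exists G : R -> R, forall u, derivable_pt_lim (fun v => g v a) u (G u).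
Proof.
  intros [gu [ga [Hexp _]]] Ha. exists (fun u => gu u a). intros x eps Heps.
  destruct (Hexp x a Ha (eps/2)) as [del [Hdel Hd]]; [lra|].
  exists (mkposreal del Hdel). intros h hne hlt. simpl in hlt.
  specialize (Hd (x+h) a Ha). replace (x + h - x) with h in Hd by ring.
  replace (a - a) with 0 in Hd by ring. rewrite Rabs_R0, Rmult_0_r, Rminus_0_r, Rplus_0_r in Hd.
  specialize (Hd hlt Hdel).
  set (r := (g (x + h) a - g x a) / h - gu x a).
  assert (Hr : g (x + h) a - g x a - gu x a * h = r * h) by (unfold r; field; auto).
  rewrite Hr, Rabs_mult in Hd.
  assert (Hh: 0 < Rabs h) by (apply Rabs_pos_lt; auto).
  assert (Rabs r <= eps/2) by (apply (Rmult_le_reg_r (Rabs h)); lra).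
  lra.
Qed.

Lemma h_deriv (g : R -> R -> R) (k a d : R) : C1_strip g -> 0 <= a <= 1 ->
  forall u, ex_derive (hfun g k a d) u.
Proof.
  intros HC Ha u. destruct (g_deriv g a HC Ha) as [G HG].
  exists ((k+1)*1 - /d * G u). apply is_derive_Reals.
  unfold hfun.
  apply (derivable_pt_lim_minus (fun v => (k+1)*v) (fun v => /d * g v a)).
  - apply derivable_pt_lim_scal. apply derivable_pt_lim_id.
  - apply derivable_pt_lim_scal. apply HG.
Qed.

Lemma h_inc (g : R -> R -> R) (k a d p q : R) : C1_strip g -> 0 <= a <= 1 -> p < q ->
  (forall v, p < v < q -> Derive (hfun g k a d) v > 0) ->
  forall x y, p <= x <= q -> p <= y <= q -> x < y -> hfun g k a d x < hfun g k a d y.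
Proof.
  intros HC Ha Hpq Hpos.
  set (pr := fun u => ex_derive_Reals_0 _ _ (h_deriv g k a d HC Ha u)).
  apply (derive_increasing_interv p q _ pr Hpq).
  intros t Ht. rewrite Derive_Reals. apply Hpos; auto.
Qed.

Lemma h_cont (g : R -> R -> R) (k a d : R) : C1_strip g -> 0 <= a <= 1 ->
  continuity (hfun g k a d).
Proof.
  intros HC Ha x. apply derivable_continuous_pt. apply ex_derive_Reals_0. apply h_deriv; auto.
Qed.

Definition Inv (h H : R -> R) (p q M : R) : Prop :=
  (forall x y, p <= x <= q -> p <= y <= q -> x < y -> h x < h y) /\
  (forall c, 0 <= c <= M -> p <= H c <= q /\ h (H c) = c).

Lemma H_exists (h : R -> R) (p q M : R) : continuity h -> p <= q -> h p <= 0 -> M <= h q ->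
  exists H, forall c, 0 <= c <= M -> p <= H c <= q /\ h (H c) = c.
Proof.
  intros Hc Hpq Hp Hq.
  assert (A : forall c, exists y, 0 <= c <= M -> p <= y <= q /\ h y = c).
  { intros c. destruct (Rle_dec 0 c) as [c0|c0]; [destruct (Rle_dec c M) as [c1|c1]|].
    - destruct (IVT_cor (fun y => h y - c) p q) as [z [Hz1 Hz2]]; auto.
      + apply (continuity_minus h (fct_cte c)); auto. apply continuity_const. intros u v; reflexivity.
      + assert (h p - c <= 0) by lra. assert (0 <= h q - c) by lra.
        apply Rmult_le_0_r; auto.
      + exists z. intros _. split; auto. lra.
    - exists 0. intros; lra.
    - exists 0. intros; lra. }
  exists (fun c => proj1_sig (constructive_indefinite_description _ (A c))).
  intros c Hc'. apply (proj2_sig (constructive_indefinite_description _ (A c))). auto.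
Qed.

Lemma Hmono h H p q M : Inv h H p q M -> forall c1 c2, 0 <= c1 <= M -> 0 <= c2 <= M ->
  c1 <= c2 -> H c1 <= H c2.
Proof.
  intros [Hi Hv] c1 c2 H1 H2 H12. destruct (Rle_dec (H c1) (H c2)) as [|n]; auto.
  destruct (Hv c1 H1), (Hv c2 H2). assert (h (H c2) < h (H c1)) by (apply Hi; auto; lra). lra.
Qed.

Lemma Hstrict h H p q M : Inv h H p q M -> forall c1 c2, 0 <= c1 <= M -> 0 <= c2 <= M ->
  c1 < c2 -> H c1 < H c2.
Proof.
  intros [Hi Hv] c1 c2 H1 H2 H12. destruct (Rlt_dec (H c1) (H c2)) as [|n]; auto.
  destruct (Hv c1 H1), (Hv c2 H2). destruct (Req_dec (H c1) (H c2)) as [e|e].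
  - assert (h (H c1) = h (H c2)) by (rewrite e; auto). lra.
  - assert (h (H c2) < h (H c1)) by (apply Hi; auto; lra). lra.
Qed.

Lemma Huniq h H p q M : Inv h H p q M -> forall y, p <= y <= q -> 0 <= h y <= M -> H (h y) = y.
Proof.
  intros [Hi Hv] y Hy Hhy. destruct (Hv _ Hhy) as [Hz Ez].
  destruct (Rtotal_order (H (h y)) y) as [l|[e|l]]; auto.
  - assert (h (H (h y)) < h y) by (apply Hi; auto). lra.
  - assert (h y < h (H (h y))) by (apply Hi; auto). lra.
Qed.

Lemma hmono h H p q M : Inv h H p q M -> forall x y, p <= x <= q -> p <= y <= q -> x <= y -> h x <= h y.
Proof.
  intros [Hi Hv] x y Hx Hy Hxy. destruct (Req_dec x y) as [e|e].
  - subst; lra.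
  - left. apply Hi; auto. lra.
Qed.

Definition contM (H : R -> R) (M : R) : Prop :=
  forall c, 0 <= c <= M -> forall eps, 0 < eps -> exists delta, 0 < delta /\
    forall c', 0 <= c' <= M -> Rabs (c' - c) < delta -> Rabs (H c' - H c) < eps.

Lemma Hcont h H p q M : Inv h H p q M -> contM H M.
Proof.
  intros HI c Hc eps He. pose proof HI as [Hi Hv].
  destruct (Hv c Hc) as [Hy Ey]. set (y := H c) in *.
  assert (Hup : exists d1, 0 < d1 /\ forall c', 0 <= c' <= M -> c' < c + d1 -> H c' < y + eps).
  { destruct (Rlt_dec y q) as [l|n].
    - set (hi := Rmin q (y + eps/2)).
      assert (y < hi) by (unfold hi; apply Rmin_case; lra).
      assert (hi <= y + eps/2) by (unfold hi; apply Rmin_r).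
      assert (hi <= q) by (unfold hi; apply Rmin_l).
      exists (h hi - c). split.
      + assert (h y < h hi) by (apply Hi; lra). lra.
      + intros c' Hc' Hlt. destruct (Hv c' Hc') as [Hz Ez].
        destruct (Rlt_dec (H c') hi) as [l2|n2]; [lra|].
        destruct (Req_dec (H c') hi) as [e2|e2].
        * rewrite e2 in Ez. lra.
        * assert (h hi < h (H c')) by (apply Hi; lra). lra.
    - exists 1. split; [lra|]. intros c' Hc' _. destruct (Hv c' Hc'). lra. }
  assert (Hlo : exists d2, 0 < d2 /\ forall c', 0 <= c' <= M -> c - d2 < c' -> y - eps < H c').
  { destruct (Rlt_dec p y) as [l|n].
    - set (lo := Rmax p (y - eps/2)).
      assert (lo < y) by (unfold lo; apply Rmax_case; lra).
      assert (y - eps/2 <= lo) by (unfold lo; apply Rmax_r).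
      assert (p <= lo) by (unfold lo; apply Rmax_l).
      exists (c - h lo). split.
      + assert (h lo < h y) by (apply Hi; lra). lra.
      + intros c' Hc' Hlt. destruct (Hv c' Hc') as [Hz Ez].
        destruct (Rlt_dec lo (H c')) as [l2|n2]; [lra|].
        destruct (Req_dec (H c') lo) as [e2|e2].
        * rewrite e2 in Ez. lra.
        * assert (h (H c') < h lo) by (apply Hi; lra). lra.
    - exists 1. split; [lra|]. intros c' Hc' _. destruct (Hv c' Hc'). lra. }
  destruct Hup as [d1 [Hd1 Hu]], Hlo as [d2 [Hd2 Hl]].
  exists (Rmin d1 d2). split. { apply Rmin_case; lra. }
  intros c' Hc' Hd. assert (Rabs (c' - c) < d1) by (eapply Rlt_le_trans; [apply Hd| apply Rmin_l]).
  assert (Rabs (c' - c) < d2) by (eapply Rlt_le_trans; [apply Hd| apply Rmin_r]).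
  apply Rabs_def2 in H0. apply Rabs_def2 in H1.
  specialize (Hu c' Hc'). specialize (Hl c' Hc').
  apply Rabs_def1; fold y; [assert (H c' < y + eps) by (apply Hu; lra) | assert (y - eps < H c') by (apply Hl; lra)]; lra.
Qed.

Lemma cont_comp H M (L : R -> R) al : contM H M -> 0 < al -> (forall x, 0 <= x <= 1 -> 0 <= L x <= M) ->
  (forall x y, Rabs (L y - L x) = al * Rabs (y - x)) -> cont01 (fun x => H (L x)).
Proof.
  intros Hc Hal HL HLa x Hx eps He. destruct (Hc (L x) (HL x Hx) eps He) as [dl [Hdl Hd]].
  exists (dl / al). split. { apply Rdiv_lt_0_compat; auto. }
  intros y Hy Hyx. apply Hd. { apply HL; auto. }
  rewrite HLa. apply (Rmult_lt_compat_l al) in Hyx; auto.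
  replace (al * (dl / al)) with dl in Hyx by (field; lra). auto.
Qed.

Lemma strip (F : R * R -> R * R) (h H : R -> R) (k p q : R) :
  0 < k -> 0 <= p -> q <= 1 -> Inv h H p q (k + 1) ->
  (forall u v, F (u, v) = ((h u - v) / k, u)) ->
  strip_curves (fun v => H v) (fun v => H (v + k)) /\
  strip_curves (fun x => H (k * x)) (fun x => H (k * x + 1)) /\
  (forall pt, vstrip (fun v => H v) (fun v => H (v + k)) pt -> p <= fst pt <= q) /\
  (forall pt, hstrip (fun x => H (k * x)) (fun x => H (k * x + 1)) pt -> p <= snd pt <= q) /\
  in_square (vstrip (fun v => H v) (fun v => H (v + k))) /\
  in_square (hstrip (fun x => H (k * x)) (fun x => H (k * x + 1))) /\
  seteq2 (image2 F (vstrip (fun v => H v) (fun v => H (v + k))))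
         (hstrip (fun x => H (k * x)) (fun x => H (k * x + 1))) /\
  seteq2 (image2 F (vstrip_vbdry (fun v => H v) (fun v => H (v + k))))
         (hstrip_vbdry (fun x => H (k * x)) (fun x => H (k * x + 1))) /\
  seteq2 (image2 F (vstrip_hbdry (fun v => H v) (fun v => H (v + k))))
         (hstrip_hbdry (fun x => H (k * x)) (fun x => H (k * x + 1))).
Proof.
  intros Hk Hp Hq HI HF.
  pose proof (Hcont _ _ _ _ _ HI) as HC.
  pose proof HI as [Hi Hv].
  pose proof (Hmono _ _ _ _ _ HI) as HM.
  pose proof (Hstrict _ _ _ _ _ HI) as HS.
  pose proof (Huniq _ _ _ _ _ HI) as HU.
  pose proof (hmono _ _ _ _ _ HI) as Hh.
  assert (Hval : forall c, 0 <= c <= k + 1 -> 0 <= H c <= 1).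
  { intros c Hc. destruct (Hv c Hc). lra. }
  assert (Cu : strip_curves (fun v => H v) (fun v => H (v + k))).
  { split; [|split].
    - split.
      + apply (cont_comp H (k+1) (fun v => v) 1); auto; [lra|intros; lra|].
        intros; rewrite Rmult_1_l; auto.
      + intros; apply Hval; lra.
    - split.
      + apply (cont_comp H (k+1) (fun v => v + k) 1); auto; [lra|intros; lra|].
        intros; rewrite Rmult_1_l. f_equal; ring.
      + intros; apply Hval; lra.
    - intros x Hx. apply HS; lra. }
  assert (Cv : strip_curves (fun x => H (k * x)) (fun x => H (k * x + 1))).
  { split; [|split].
    - split.
      + apply (cont_comp H (k+1) (fun x => k * x) k); auto.
        * intros; split; nra.
        * intros. rewrite <- Rmult_minus_distr_l, Rabs_mult, Rabs_pos_eq; lra.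
      + intros; apply Hval; nra.
    - split.
      + apply (cont_comp H (k+1) (fun x => k * x + 1) k); auto.
        * intros; split; nra.
        * intros. replace (k * y + 1 - (k * x + 1)) with (k * (y - x)) by ring.
          rewrite Rabs_mult, Rabs_pos_eq; lra.
      + intros; apply Hval; nra.
    - intros x Hx. apply HS; nra. }
  assert (Pv : forall pt, vstrip (fun v => H v) (fun v => H (v + k)) pt -> p <= fst pt <= q).
  { intros [u v] [Hv0 [H1 H2]]; simpl in *. destruct (Hv v), (Hv (v + k)); lra. }
  assert (Ph : forall pt, hstrip (fun x => H (k * x)) (fun x => H (k * x + 1)) pt -> p <= snd pt <= q).
  { intros [x y] [Hx0 [H1 H2]]; simpl in *. destruct (Hv (k * x)), (Hv (k * x + 1)); try nra. }
  split; [auto|split; [auto|split; [auto|split; [auto|]]]].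
  split. { intros [u v] Hpt. pose proof (Pv _ Hpt). destruct Hpt as [Hv0 _]. simpl in *. lra. }
  split. { intros [x y] Hpt. pose proof (Ph _ Hpt). destruct Hpt as [Hx0 _]. simpl in *. lra. }
  split; [|split].
  -
    intros [x y]; split.
    + intros [[u v] [[Hv0 [H1 H2]] Heq]]. simpl in *. rewrite HF in Heq.
      injection Heq as Ex Ey. subst y.
      destruct (Hv v) as [Hb1 Hb2]; [lra|]. destruct (Hv (v + k)) as [Hb3 Hb4]; [lra|].
      assert (Hu : p <= u <= q) by lra.
      assert (h (H v) <= h u) by (apply Hh; auto; lra).
      assert (h u <= h (H (v + k))) by (apply Hh; auto; lra).
      assert (Ekx : k * x = h u - v) by (subst x; field; lra).
      assert (0 <= x <= 1) by (split; nra).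
      split; simpl; auto. rewrite Ekx.
      assert (Eu : H (h u) = u) by (apply HU; auto; lra).
      split; apply Rle_trans with (H (h u)); try lra; apply HM; lra.
    + intros [Hx0 [H1 H2]]. simpl in *.
      destruct (Hv (k * x)) as [Hb1 Hb2]; [nra|]. destruct (Hv (k * x + 1)) as [Hb3 Hb4]; [nra|].
      assert (Hy : p <= y <= q) by lra.
      assert (h (H (k * x)) <= h y) by (apply Hh; auto; lra).
      assert (h y <= h (H (k * x + 1))) by (apply Hh; auto; lra).
      exists (y, h y - k * x). split.
      * split; simpl; [lra|].
        assert (Eu : H (h y) = y) by (apply HU; auto; nra).
        split; apply Rle_trans with (H (h y)); try lra; apply HM; nra.
      * rewrite HF. f_equal. field. lra.
  -
    intros [x y]; split.
    + intros [[u v] [Hb Heq]]. rewrite HF in Heq. injection Heq as Ex Ey. subst y.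
      destruct Hb as [[Hv0 E]|[Hv0 E]]; simpl in *; subst u.
      * destruct (Hv v) as [Hb1 Hb2]; [lra|]. rewrite Hb2 in Ex.
        replace ((v - v) / k) with 0 in Ex by (field; lra). subst x.
        split; [|left; reflexivity]. split; simpl; [lra|].
        rewrite Rmult_0_r, Rplus_0_l. split; apply HM; lra.
      * destruct (Hv (v + k)) as [Hb1 Hb2]; [lra|]. rewrite Hb2 in Ex.
        replace ((v + k - v) / k) with 1 in Ex by (field; lra). subst x.
        split; [|right; reflexivity]. split; simpl; [lra|].
        rewrite Rmult_1_r. split; apply HM; lra.
    + intros [[Hx0 [H1 H2]] Hx]. simpl in *.
      destruct Hx as [e|e]; subst x.
      * rewrite Rmult_0_r, Rplus_0_l in *.
        destruct (Hv 0) as [Hb1 Hb2]; [lra|]. destruct (Hv 1) as [Hb3 Hb4]; [lra|].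
        assert (Hy : p <= y <= q) by lra.
        assert (h (H 0) <= h y) by (apply Hh; auto; lra).
        assert (h y <= h (H 1)) by (apply Hh; auto; lra).
        exists (y, h y). split.
        -- left. split; simpl; [lra|]. symmetry. apply HU; auto. lra.
        -- rewrite HF. f_equal. field. lra.
      * rewrite Rmult_1_r in *.
        destruct (Hv k) as [Hb1 Hb2]; [lra|]. destruct (Hv (k + 1)) as [Hb3 Hb4]; [lra|].
        assert (Hy : p <= y <= q) by lra.
        assert (h (H k) <= h y) by (apply Hh; auto; lra).
        assert (h y <= h (H (k + 1))) by (apply Hh; auto; lra).
        exists (y, h y - k). split.
        -- right. split; simpl; [lra|]. replace (h y - k + k) with (h y) by ring.
           symmetry. apply HU; auto. lra.
        -- rewrite HF. f_equal. field. lra.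
  -
    intros [x y]; split.
    + intros [[u v] [[[Hv0 [H1 H2]] Hb] Heq]]. rewrite HF in Heq. injection Heq as Ex Ey. subst y.
      simpl in *.
      destruct Hb as [e|e]; subst v.
      * rewrite Rplus_0_l in H2.
        destruct (Hv 0) as [Hb1 Hb2]; [lra|]. destruct (Hv k) as [Hb3 Hb4]; [lra|].
        assert (Hu : p <= u <= q) by lra.
        assert (h (H 0) <= h u) by (apply Hh; auto; lra).
        assert (h u <= h (H k)) by (apply Hh; auto; lra).
        assert (Ekx : k * x = h u) by (subst x; field; lra).
        left. split; simpl; [split; nra|]. rewrite Ekx. symmetry. apply HU; auto. lra.
      * destruct (Hv 1) as [Hb1 Hb2]; [lra|]. destruct (Hv (1 + k)) as [Hb3 Hb4]; [lra|].
        assert (Hu : p <= u <= q) by lra.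
        assert (h (H 1) <= h u) by (apply Hh; auto; lra).
        assert (h u <= h (H (1 + k))) by (apply Hh; auto; lra).
        assert (Ekx : k * x + 1 = h u) by (subst x; field; lra).
        right. split; simpl; [split; nra|]. rewrite Ekx. symmetry. apply HU; auto. lra.
    + intros [[Hx0 E]|[Hx0 E]]; simpl in *; subst y.
      * destruct (Hv (k * x)) as [Hb1 Hb2]; [nra|].
        exists (H (k * x), 0). split.
        -- split; [split; simpl; [lra|]|left; reflexivity].
           rewrite Rplus_0_l. split; apply HM; nra.
        -- rewrite HF, Hb2. f_equal. field. lra.
      * destruct (Hv (k * x + 1)) as [Hb1 Hb2]; [nra|].
        exists (H (k * x + 1), 1). split.
        -- split; [split; simpl; [lra|]|right; reflexivity].
           split; apply HM; nra.
        -- rewrite HF, Hb2. f_equal. field. lra.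
Qed.

Theorem lemma8p2 (g : R -> R -> R) (k a d : R) :
  0 < k -> 0 < a < 1 -> 0 < d -> Hg g -> Hd g k a d ->
  exists (v10 v20 v11 v21 u10 u20 u11 u21 : R -> R),
    strip_curves v10 v20 /\ strip_curves v11 v21 /\
    strip_curves u10 u20 /\ strip_curves u11 u21 /\
    disjoint2 (hstrip v10 v20) (hstrip v11 v21) /\
    disjoint2 (vstrip u10 u20) (vstrip u11 u21) /\
    in_square (hstrip v10 v20) /\ in_square (hstrip v11 v21) /\
    in_square (vstrip u10 u20) /\ in_square (vstrip u11 u21) /\
    seteq2 (image2 (phi g k a d) (vstrip u10 u20)) (hstrip v10 v20) /\
    seteq2 (image2 (phi g k a d) (vstrip u11 u21)) (hstrip v11 v21) /\
    seteq2 (image2 (phi g k a d) (vstrip_vbdry u10 u20)) (hstrip_vbdry v10 v20) /\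
    seteq2 (image2 (phi g k a d) (vstrip_vbdry u11 u21)) (hstrip_vbdry v11 v21) /\
    seteq2 (image2 (phi g k a d) (vstrip_hbdry u10 u20)) (hstrip_hbdry v10 v20) /\
    seteq2 (image2 (phi g k a d) (vstrip_hbdry u11 u21)) (hstrip_hbdry v11 v21).
Proof.
  intros Hk Ha Hd0 [HC Hga] [y0 [y1 [Hy0 [Hy1 [Hh0 [Hh1 Hpos]]]]]].
  destruct (Hga a Ha) as [g0 [_ [g1 _]]].
  assert (Ha01 : 0 <= a <= 1) by lra.
  assert (E0 : hfun g k a d 0 = 0) by (unfold hfun; rewrite g0; ring).
  assert (E1 : hfun g k a d 1 = k + 1) by (unfold hfun; rewrite g1; ring).
  assert (Hi0 := h_inc g k a d 0 y0 HC Ha01 (proj1 Hy0) (fun v Hv => Hpos v (or_introl Hv))).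
  assert (Hi1 := h_inc g k a d y1 1 HC Ha01 (proj2 Hy1) (fun v Hv => Hpos v (or_intror Hv))).
  destruct (H_exists (hfun g k a d) 0 y0 (k + 1) (h_cont g k a d HC Ha01)) as [H0 HH0]; try lra.
  destruct (H_exists (hfun g k a d) y1 1 (k + 1) (h_cont g k a d HC Ha01)) as [H1 HH1]; try lra.
  assert (HF : forall u v, phi g k a d (u, v) = ((hfun g k a d u - v) / k, u)).
  { intros u v. unfold phi, hfun. f_equal. field. split; lra. }
  destruct (strip (phi g k a d) (hfun g k a d) H0 k 0 y0 Hk ltac:(lra) ltac:(lra) (conj Hi0 HH0) HF)
    as [Cu0 [Cv0 [Pv0 [Ph0 [Sv0 [Sh0 [I0 [B0 C0]]]]]]]].
  destruct (strip (phi g k a d) (hfun g k a d) H1 k y1 1 Hk ltac:(lra) ltac:(lra) (conj Hi1 HH1) HF)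
    as [Cu1 [Cv1 [Pv1 [Ph1 [Sv1 [Sh1 [I1 [B1 C1]]]]]]]].
  exists (fun x => H0 (k * x)), (fun x => H0 (k * x + 1)), (fun x => H1 (k * x)), (fun x => H1 (k * x + 1)),
    (fun v => H0 v), (fun v => H0 (v + k)), (fun v => H1 v), (fun v => H1 (v + k)).
  do 4 (split; [assumption|]).
  split. { intros pt [A B]. apply Ph0 in A. apply Ph1 in B. lra. }
  split. { intros pt [A B]. apply Pv0 in A. apply Pv1 in B. lra. }
  do 9 (split; [assumption|]). assumption.
Qed.
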